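(* Let $g:E^2\times E^2\to\mathbb R$ and $\varepsilon>0$. There exist constants $\eta,K>0$ such that for all $s>0$ and all integers $i,\delta_1,\delta_2\ge 0$, $T\ge1$ with $i\le\delta_1$, $\delta_2\ge\delta_1-i$, $i+T\ge\delta_1+1$, writing $\varepsilon_1=\varepsilon_{(0,0),\delta_1}$ and $\varepsilon_2=\varepsilon_{(i,i+T),\delta_2}$, $$\mathbb P\big(\delta_1\varepsilon_1(f)>s,\ d(\varepsilon_1,\hat\pi)<\eta,\ \delta_2\varepsilon_2(f)>s,\ d(\varepsilon_2,\hat\pi)<\eta\big)\le K\exp\Big(-s\Big(\frac{2\hat\pi(g)-\log\varphi_1(g)}{\pi^*(f)}-\varepsilon\Big)\Big).$$
   Context: Let $E$ be a finite set and $P,Q$ irreducible aperiodic stochastic $E\times E$ matrices with invariant probability vectors $\pi_P,\pi_Q$; $\pi=\pi_P\otimes\pi_Q$. Under $\mathbb P$, $(X_n)_{n\ge0}$, $(Y_n)_{n\ge0}$ are independent stationary Markov chains with transition matrices $P,Q$. Let $f:E\times E\to\mathbb Z$ with gcd of its values equal to $1$, $\nu(f)=\sum f\,d\nu$, and assume $\pi(f)<0$ and (C1): for some $n\ge1$ there are cycles $x_1,\dots,x_n$ w.r.t. $P$ and $y_1,\dots,y_n$ w.r.t. $Q$ (i.e. $P(x_k,x_{k+1})>0$, $Q(y_k,y_{k+1})>0$ for all $k$, indices mod $n$) with $\sum_kf(x_k,y_k)>0$. Let $\Phi(\theta)_{(x,y),(x',y')}=e^{\theta f(x',y')}P_{x,x'}Q_{y,y'}$,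 $\varphi(\theta)$ its spectral radius, $\theta^*>0$ the unique positive solution of $\varphi(\theta)=1$, $r^*$ a positive right eigenvector of $\Phi(\theta^* )$ for eigenvalue 1, $R^*_{(x,y),(x',y')}=\frac{r^*(x',y')}{r^*(x,y)}\Phi(\theta^* )_{(x,y),(x',y')}$, $\pi^*$ its invariant probability vector, and $\hat\pi(x,y,x',y')=\pi^*(x,y)R^*_{(x,y),(x',y')}$. The function $f$ is also regarded as a function on $E^2\times E^2$ via $f(x,y,x',y')=f(x',y')$. $\varphi_1(g)$ is the spectral radius of $\Phi_1(g)_{(x,y,z),(x',y',z')}=\exp(g(x,y,x',y')+g(x,z,x',z'))P_{x,x'}Q_{y,y'}Q_{z,z'}$. For $a=(i,j)$ and $\delta\ge1$, $\varepsilon_{a,\delta}$ is the empirical probability measure on $E^2\times E^2$, $\varepsilon_{a,\delta}(v)=\frac1\delta\sum_{k=1}^\delta 1\{((X_{i+k-1},Y_{j+k-1}),(X_{i+k},Y_{j+k}))=v\}$; $d$ is the total variation metric on probability measures on $E^2\times E^2$. *)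

(* Defs.v *)
From mathcomp Require Import all_boot all_order all_algebra.
From mathcomp Require Import classical_sets reals sequences exp.
From mathcomp Require Import complex.
Set Implicit Arguments.
Unset Strict Implicit.
Unset Printing Implicit Defensive.
Import GRing.Theory Num.Theory.
Local Open Scope ring_scope.

Section Defs.
Variable R : realType.

Definition fmx (T : finType) (A : T -> T -> R) : 'M[R]_#|T| :=
  \matrix_(i, j) A (enum_val i) (enum_val j).

Definition specrad (T : finType) (A : T -> T -> R) : R :=
  sup [set Normc.normc l | l in
        [set l : R[i] | eigenvalue (map_mx (fun x => x%:C%C) (fmx A)) l]]%classic.

Definition stochastic (E : finType) (P : E -> E -> R) : Prop :=
  (forall x y, 0 <= P x y) /\ (forall x, \sum_y P x y = 1).

Fixpoint mpow (E : finType) (P : E -> E -> R) (n : nat) : E -> E -> R :=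
  match n with
  | 0%N => fun x y => (x == y)%:R
  | n'.+1 => fun x y => \sum_z mpow P n' x z * P z y
  end.

Definition irreducible (E : finType) (P : E -> E -> R) : Prop :=
  forall x y, exists n, 0 < mpow P n x y.

(* every state has period 1: the gcd of {n >= 1 | P^n(x,x) > 0} is 1,
   i.e. no d > 1 divides all such n *)
Definition aperiodic (E : finType) (P : E -> E -> R) : Prop :=
  forall x (d : nat), (1 < d)%N ->
    exists n : nat, [/\ (0 < n)%N, 0 < mpow P n x x & ~~ (d %| n)%N].

Definition prob_vec (T : finType) (p : T -> R) : Prop :=
  (forall x, 0 <= p x) /\ \sum_x p x = 1.

Definition inv_vec (T : finType) (P : T -> T -> R) (p : T -> R) : Prop :=
  forall y, \sum_x p x * P x y = p y.

Definition Phi (E : finType) (P Q : E -> E -> R) (f : E -> E -> int) (theta : R)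
  (u v : E * E) : R :=
  expR (theta * (f v.1 v.2)%:~R) * P u.1 v.1 * Q u.2 v.2.

Definition varphi (E : finType) (P Q : E -> E -> R) (f : E -> E -> int) (theta : R) : R :=
  specrad (Phi P Q f theta).

Definition Rstar (E : finType) (P Q : E -> E -> R) (f : E -> E -> int) (theta : R)
  (r : E * E -> R) (u v : E * E) : R :=
  r v / r u * Phi P Q f theta u v.

(* measures on E^2 x E^2 are functions ((x,y),(x',y')) |-> mass *)
Definition pihat (E : finType) (pistar : E * E -> R) (Rs : E * E -> E * E -> R)
  (w : (E * E) * (E * E)) : R :=
  pistar w.1 * Rs w.1 w.2.

Definition Phi1 (E : finType) (P Q : E -> E -> R) (g : (E * E) * (E * E) -> R)
  (u v : E * E * E) : R :=
  let: (x, y, z) := u in let: (x', y', z') := v in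
  expR (g ((x, y), (x', y')) + g ((x, z), (x', z'))) * P x x' * Q y y' * Q z z'.

Definition varphi1 (E : finType) (P Q : E -> E -> R) (g : (E * E) * (E * E) -> R) : R :=
  specrad (Phi1 P Q g).

Definition integ (T : finType) (nu : T -> R) (h : T -> R) : R := \sum_t h t * nu t.

Definition f2 (E : finType) (f : E -> E -> int) (w : (E * E) * (E * E)) : R :=
  (f w.2.1 w.2.2)%:~R.

Definition tvd (T : finType) (mu nu : T -> R) : R :=
  \big[Num.max/0]_(A : {set T}) `|\sum_(t in A) (mu t - nu t)|.

Definition empirical (E : finType) (X Y : nat -> E) (i j delta : nat)
  (v : (E * E) * (E * E)) : R :=
  delta%:R^-1 * \sum_(1 <= k < delta.+1)
     ((((X (i + k - 1)%N, Y (j + k - 1)%N), (X (i + k)%N, Y (j + k)%N)) == v))%:R.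

Definition path_of (E : finType) (N : nat) (w : {ffun 'I_N.+1 -> E}) : nat -> E :=
  fun k => w (inord k).

Definition mc_weight (E : finType) (pi : E -> R) (P : E -> E -> R) (N : nat)
  (w : {ffun 'I_N.+1 -> E}) : R :=
  pi (w ord0) * \prod_(k < N) P (w (inord k)) (w (inord k.+1)).

(* probability of an event depending only on (X_0..X_N) and (Y_0..Y_N),
   X ~ stationary Markov(pi_P, P), Y ~ stationary Markov(pi_Q, Q), independent *)
Definition prob_ev (E : finType) (piP piQ : E -> R) (P Q : E -> E -> R) (N : nat)
  (ev : (nat -> E) -> (nat -> E) -> bool) : R :=
  \sum_(wx : {ffun 'I_N.+1 -> E}) \sum_(wy : {ffun 'I_N.+1 -> E})
     (ev (path_of wx) (path_of wy))%:R * (mc_weight piP P wx * mc_weight piQ Q wy).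

End Defs.

(* Main.v *)
Require Import Defs.
From mathcomp Require Import all_boot all_order all_algebra.
From mathcomp Require Import classical_sets reals sequences exp.
From mathcomp Require Import complex.
From mathcomp Require Import boolp ring lra zify.
Import Order.TTheory GRing.Theory Num.Theory.
Local Open Scope ring_scope.

Set Implicit Arguments.
Unset Strict Implicit.
Unset Printing Implicit Defensive.


Section VP.
Variable R : realType.
Variable T : finType.
Implicit Types (mu nu : T -> R) (A B : nat -> T -> T -> R).

Fixpoint vp mu A n : T -> R :=
  match n with 0%N => mu | n'.+1 => fun v => \sum_u vp mu A n' u * A n' u v end.

Definition nonnegK A := forall k u v, 0 <= A k u v.

Lemma vp_ge0 mu A n v : (forall u, 0 <= mu u) -> nonnegK A -> 0 <= vp mu A n v.
Proof.
move=> Hmu HA; elim: n v => [|n IH] v //=.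
by apply: sumr_ge0 => u _; apply: mulr_ge0.
Qed.

Lemma vp_add mu A m n : vp mu A (m + n) = vp (vp mu A m) (fun k => A (m + k)%N) n.
Proof.
elim: n => [|n IH]; first by rewrite addn0.
by rewrite addnS /= IH.
Qed.

Lemma vp_ext mu A B n : (forall k, (k < n)%N -> A k = B k) -> vp mu A n = vp mu B n.
Proof.
elim: n => [|n IH] H //=.
rewrite IH; last by move=> k kn; apply: H; apply: ltnW.
by rewrite H.
Qed.

Lemma vp_sum_stoch mu A n : (forall k u, (k < n)%N -> \sum_v A k u v = 1) ->
  \sum_v vp mu A n v = \sum_v mu v.
Proof.
elim: n => [|n IH] H //=.
rewrite exchange_big /= -IH; last by move=> k u kn; apply: H; apply: ltnW.
by apply: eq_bigr => u _; rewrite -mulr_sumr H // mulr1.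
Qed.

Lemma vp_inv mu A (P : T -> T -> R) n : (forall k, (k < n)%N -> A k = P) ->
  inv_vec P mu -> vp mu A n = mu.
Proof.
move=> H Hinv; elim: n H => [|n IH] H //=.
rewrite IH; last by move=> k kn; apply: H; apply: ltnW.
by apply/funext => v; rewrite H.
Qed.

Lemma vp_le mu nu A n v : (forall u, 0 <= mu u) -> (forall u, mu u <= nu u) -> nonnegK A ->
  vp mu A n v <= vp nu A n v.
Proof.
move=> H0 Hle HA; elim: n v => [|n IH] v //=.
apply: ler_sum => u _; apply: ler_wpM2r => //; exact: IH.
Qed.

Lemma vp_scale (c : R) mu A n v : vp (fun u => c * mu u) A n v = c * vp mu A n v.
Proof.
elim: n v => [|n IH] v //=.
rewrite mulr_sumr; apply: eq_bigr => u _; by rewrite IH mulrA.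
Qed.

Lemma vp_lin mu A n v : vp mu A n v = \sum_u mu u * vp (fun w => (w == u)%:R) A n v.
Proof.
elim: n v => [|n IH] v /=.
  rewrite (bigD1 v) //= eqxx mulr1 big1 ?addr0 // => u /negPf; by rewrite eq_sym => ->; rewrite mulr0.
under eq_bigr do rewrite IH mulr_suml.
rewrite exchange_big /=; apply: eq_bigr => u _; rewrite mulr_sumr.
by apply: eq_bigr => w _; rewrite mulrA.
Qed.

Lemma vp_window mu A n m d : (m + d <= n)%N ->
  (forall k u, (m + d <= k < n)%N -> \sum_v A k u v = 1) ->
  \sum_v vp mu A n v = \sum_v vp (vp mu A m) (fun j => A (m + j)%N) d v.
Proof.
move=> Hn Hs; rewrite -(subnKC Hn) vp_add vp_sum_stoch; last first.
  move=> k u kn; apply: Hs; rewrite leq_addr /=; by rewrite -ltn_subRL.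
by rewrite vp_add.
Qed.

End VP.




Section Paths.
Variable R : realType.
Variable T : finType.

Definition fext n (g : {ffun 'I_n -> T}) (x : T) : {ffun 'I_n.+1 -> T} :=
  [ffun k => if unlift ord_max k is Some k' then g k' else x].

Definition finit n (f : {ffun 'I_n.+1 -> T}) : {ffun 'I_n -> T} :=
  [ffun k => f (widen_ord (leqnSn n) k)].

Lemma unlift_max_widen n (k : 'I_n) :
  unlift ord_max (widen_ord (leqnSn n) k) = Some k.
Proof.
case: unliftP => [j /(congr1 val) /= Hj| /(congr1 val) /= Hk].
  by congr Some; apply: val_inj; move: Hj; rewrite /bump leqNgt ltn_ord /= add0n.
by move: (ltn_ord k); rewrite Hk ltnn.
Qed.

Lemma sum_ffunS n (F : {ffun 'I_n.+1 -> T} -> R) :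
  \sum_f F f = \sum_(g : {ffun 'I_n -> T}) \sum_(x : T) F (fext g x).
Proof.
rewrite pair_big /=.
rewrite (reindex (fun p : {ffun 'I_n -> T} * T => fext p.1 p.2)) //=.
exists (fun f => (finit f, f ord_max)) => [[g x] _|f _] /=.
  congr pair.
    apply/ffunP => k; rewrite !ffunE.
    by rewrite unlift_max_widen.
  by rewrite ffunE unlift_none.
apply/ffunP => k; rewrite ffunE.
case: unliftP => [j ->|->] //.
rewrite ffunE; congr (f _); apply: val_inj => /=.
by rewrite /bump leqNgt ltn_ord.
Qed.

Lemma fext_inord n (g : {ffun 'I_n.+1 -> T}) x k : (k <= n)%N ->
  fext g x (inord k) = g (inord k).
Proof.
move=> kn; rewrite ffunE.
have -> : (@inord n.+1 k) = widen_ord (leqnSn n.+1) (inord k).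
  by apply: val_inj; rewrite /= !inordK // ltnS // ltnW.
by rewrite unlift_max_widen.
Qed.

Lemma fext_last n (g : {ffun 'I_n -> T}) x : fext g x (inord n) = x.
Proof.
rewrite ffunE.
have -> : (@inord n n) = ord_max by apply: val_inj; rewrite /= inordK.
by rewrite unlift_none.
Qed.

Lemma pathsum (mu : T -> R) (A : nat -> T -> T -> R) n (h : T -> R) :
  \sum_(w : {ffun 'I_n.+1 -> T}) mu (w ord0) *
     (\prod_(k < n) A k (w (inord k)) (w (inord k.+1))) * h (w (inord n))
  = \sum_v vp mu A n v * h v.
Proof.
elim: n h => [|n IH] h.
  rewrite sum_ffunS /= (eq_bigr (fun _ => \sum_v mu v * h v)).
    by rewrite sumr_const card_ffun card_ord expn0 mulr1n.
  move=> g _; apply: eq_bigr => x _; rewrite big_ord0 mulr1.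
  have -> : (ord0 : 'I_1) = inord 0 by apply: val_inj; rewrite /= inordK.
  by rewrite fext_last.
rewrite sum_ffunS /=.
transitivity (\sum_(g : {ffun 'I_n.+1 -> T}) mu (g ord0) *
     (\prod_(k < n) A k (g (inord k)) (g (inord k.+1))) *
     (\sum_x A n (g (inord n)) x * h x)).
  apply: eq_bigr => g _; rewrite mulr_sumr; apply: eq_bigr => x _.
  rewrite big_ord_recr /= fext_last.
  have -> : (ord0 : 'I_n.+2) = inord 0 by apply: val_inj; rewrite /= inordK.
  rewrite fext_inord // fext_inord //.
  have -> : (@inord n 0) = ord0 by apply: val_inj; rewrite /= inordK.
  rewrite !mulrA; congr (_ * _ * _).
  congr (_ * _); apply: eq_bigr => k _.
  rewrite fext_inord; last by apply: ltnW.
  by rewrite fext_inord.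
rewrite (IH (fun u => \sum_x A n u x * h x)) /=; under eq_bigr do rewrite mulr_sumr.
rewrite exchange_big /=; apply: eq_bigr => x _.
by rewrite mulr_suml; apply: eq_bigr => u _; rewrite mulrA.
Qed.

End Paths.


Section Growth.
Variable R : realType.
Local Notation C := (R[i]).
Local Notation normc := (@Normc.normc R).

Lemma normc_ge0 (z : C) : 0 <= normc z.
Proof. by case: z => a b; rewrite /Normc.normc sqrtr_ge0. Qed.

Lemma normc_real (x : R) : normc x%:C%C = `|x|.
Proof. by rewrite /Normc.normc /= expr0n /= addr0 sqrtr_sqr. Qed.

Definition nm n (X : 'M[C]_n) : R := \sum_i \sum_j normc (X i j).

Lemma nm_ge0 n (X : 'M[C]_n) : 0 <= nm X.
Proof. by apply: sumr_ge0 => i _; apply: sumr_ge0 => j _; apply: normc_ge0. Qed.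

Lemma nmD n (X Y : 'M[C]_n) : nm (X + Y) <= nm X + nm Y.
Proof.
rewrite /nm -big_split /=; apply: ler_sum => i _.
rewrite -big_split /=; apply: ler_sum => j _; rewrite mxE.
exact: le_normcD.
Qed.

Lemma nmZ n (z : C) (X : 'M[C]_n) : nm (z *: X) = normc z * nm X.
Proof.
rewrite /nm mulr_sumr; apply: eq_bigr => i _; rewrite mulr_sumr.
by apply: eq_bigr => j _; rewrite mxE Normc.normcM.
Qed.

Lemma nm_entry n (X : 'M[C]_n) i j : normc (X i j) <= nm X.
Proof.
rewrite /nm (bigD1 i) //= (bigD1 j) //= -addrA lerDl.
apply: addr_ge0; first by apply: sumr_ge0 => k _; apply: normc_ge0.
by apply: sumr_ge0 => k _; apply: sumr_ge0 => l _; apply: normc_ge0.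
Qed.

Lemma nm0 n : nm (0 : 'M[C]_n) = 0.
Proof.
rewrite /nm big1 // => i _; rewrite big1 // => j _; rewrite mxE.
by rewrite /Normc.normc /= expr0n /= addr0 sqrtr0.
Qed.

Lemma rec_bound (u v : nat -> R) (a c M : R) : 0 <= a -> a < c ->
  (forall k, 0 <= u k) -> (forall k, v k <= M * c ^+ k) ->
  (forall k, u k.+1 <= a * u k + v k) ->
  forall k, u k <= Num.max (u 0%N) (M / (c - a)) * c ^+ k.
Proof.
move=> a0 ac u0 Hv Hu; set M' := Num.max _ _.
have ca : 0 < c - a by rewrite subr_gt0.
have HM : M <= (c - a) * M'.
  by rewrite mulrC -ler_pdivrMr // le_max lexx orbT.
elim=> [|k IH]; first by rewrite expr0 mulr1 le_max lexx.
apply: (le_trans (Hu k)).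
apply: (le_trans (lerD (ler_wpM2l a0 IH) (Hv k))).
have c0 : 0 <= c ^+ k by apply: exprn_ge0; apply: le_trans (ltW ac).
rewrite exprS.
have -> : M' * (c * c ^+ k) = a * (M' * c ^+ k) + ((c - a) * M') * c ^+ k.
  by ring.
by rewrite lerD2l ler_wpM2r.
Qed.

Lemma comm_scal n (X : 'M[C]_n) (a : C) : GRing.comm X a%:M.
Proof. by rewrite /GRing.comm -!mulmxE scalar_mxC. Qed.

Lemma mx_prod_growth n (B : 'M[C]_n.+1) (c : R) (rs : seq C) :
  (forall z, z \in rs -> normc z < c) ->
  forall Y : 'M[C]_n.+1, (\prod_(z <- rs) (B - z%:M)) *m Y = 0 ->
  exists M, forall k, nm (B ^+ k *m Y) <= M * c ^+ k.
Proof.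
elim: rs => [|z rs IH] Hrs Y.
  rewrite big_nil mul1mx => ->; exists 0 => k.
  by rewrite mulmx0 nm0 mul0r.
rewrite big_cons => Hprod.
have [M HM] : exists M, forall k, nm (B ^+ k *m ((B - z%:M) *m Y)) <= M * c ^+ k.
  apply: IH; first by move=> w wr; apply: Hrs; rewrite in_cons wr orbT.
  rewrite mulmxA mulmxE.
  have <- : GRing.comm (B - z%:M) (\prod_(j <- rs) (B - j%:M)).
    apply: commr_prod => w _; apply: commrB; last exact: comm_scal.
    apply: commr_sym; apply: commrB; first exact: commr_refl.
    exact: comm_scal.
  by rewrite -mulmxE.
have zc : normc z < c by apply: Hrs; rewrite in_cons eqxx.
eexists => k.
apply: (@rec_bound (fun k => nm (B ^+ k *m Y)) (fun k => nm (B ^+ k *m ((B - z%:M) *m Y)))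
   (normc z) c M (normc_ge0 z) zc (fun k => nm_ge0 _) HM) => {}k.
have -> : B ^+ k.+1 *m Y = B ^+ k *m ((B - z%:M) *m Y) + z *: (B ^+ k *m Y).
  rewrite exprSr -mulmxE -mulmxA scalemxAr -mulmxDr; congr (_ *m _).
  by rewrite mulmxBl mul_scalar_mx subrK.
by rewrite addrC (le_trans (nmD _ _)) // nmZ.
Qed.

Lemma mx_growth n (B : 'M[C]_n) (c : R) :
  (forall z, eigenvalue B z -> normc z < c) ->
  exists M, forall k, nm (B ^+ k) <= M * c ^+ k.
Proof.
case: n B => [|n] B H.
  by exists 0 => k; rewrite /nm big_ord0 mul0r.
have [rs Hrs] := closed_field_poly_normal (char_poly B).
move: Hrs; rewrite (monicP (char_poly_monic B)) scale1r => Hrs.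
have Hr : forall z, z \in rs -> normc z < c.
  by move=> z zr; apply: H; rewrite eigenvalue_root_char Hrs root_prod_XsubC.
have Hp : \prod_(z <- rs) (B - z%:M) *m 1%:M = 0.
  rewrite mulmx1.
  have := Cayley_Hamilton B; rewrite Hrs rmorph_prod => <-.
  by apply: eq_bigr => z _; rewrite rmorphB /= horner_mx_X horner_mx_C.
have [M HM] := @mx_prod_growth n B c rs Hr 1%:M Hp.
by exists M => k; have := HM k; rewrite mulmx1.
Qed.

End Growth.


Section Spec.
Variable R : realType.
Variable T : finType.
Local Notation normc := (@Normc.normc R).

Definition kpow (A : T -> T -> R) k u v := vp (fun w => (w == u)%:R) (fun _ => A) k v.

Lemma fmx_pow (A : T -> T -> R) k : fmx A ^+ k = fmx (kpow A k).
Proof.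
elim: k => [|k IH].
  apply/matrixP => i j; rewrite expr0 !mxE /kpow /= (inj_eq enum_val_inj) eq_sym //.
rewrite exprSr IH -mulmxE; apply/matrixP => i j; rewrite !mxE /kpow /=.
have -> : \sum_w vp (fun w0 : T => (w0 == enum_val i)%:R) (fun=> A) k w * A w (enum_val j)
  = \sum_(w in T) vp (fun w0 : T => (w0 == enum_val i)%:R) (fun=> A) k w * A w (enum_val j).
  by apply: eq_bigl.
rewrite [RHS]big_enum_val; apply: eq_bigr => l _; by rewrite !mxE.
Qed.

Lemma map_mx_pow n (X : 'M[R]_n) k :
  (map_mx (fun x => x%:C%C) X) ^+ k = map_mx (fun x => x%:C%C) (X ^+ k).
Proof.
elim: k => [|k IH].
  by apply/matrixP => i j; rewrite !expr0 !mxE; case: eqP.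
rewrite !exprSr IH -!mulmxE; apply/matrixP => i j; rewrite !mxE rmorph_sum.
by apply: eq_bigr => l _; rewrite !mxE rmorphM.
Qed.

Lemma specrad_ub (A : T -> T -> R) z :
  eigenvalue (map_mx (fun x => x%:C%C) (fmx A)) z -> normc z <= specrad A.
Proof.
move=> Hz; set B := map_mx (fun x => x%:C%C) (fmx A).
have [rs Hrs] := closed_field_poly_normal (char_poly B).
move: Hrs; rewrite (monicP (char_poly_monic B)) scale1r => Hrs.
have inrs : forall l, eigenvalue B l -> l \in rs.
  by move=> l; rewrite eigenvalue_root_char Hrs root_prod_XsubC.
rewrite /specrad; apply: sup_upper_bound; last by exists z.
split; first by exists (normc z), z.
exists (\sum_(w <- rs) normc w) => x [l Hl <-].
rewrite (big_rem _ (inrs l Hl)) /= lerDl; apply: sumr_ge0 => w _; exact: normc_ge0.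
Qed.

Lemma kpow_growth (A : T -> T -> R) c : specrad A < c ->
  exists M, forall k u v, `|kpow A k u v| <= M * c ^+ k.
Proof.
move=> Hc; set B := map_mx (fun x => x%:C%C) (fmx A).
have [M HM] := @mx_growth R _ B c (fun z Hz => le_lt_trans (specrad_ub Hz) Hc).
exists M => k u v.
have -> : kpow A k u v = (fmx A ^+ k) (enum_rank u) (enum_rank v).
  by rewrite fmx_pow mxE !enum_rankK.
rewrite -normc_real.
have <- : (B ^+ k) (enum_rank u) (enum_rank v) =
   ((fmx A ^+ k) (enum_rank u) (enum_rank v))%:C%C.
  by rewrite /B map_mx_pow mxE.
exact: le_trans (nm_entry _ _ _) (HM k).
Qed.

End Spec.


Section Basic.
Variable R : realType.
Variable E : finType.

Lemma mpow_ge0 (P : E -> E -> R) n x y : (forall x y, 0 <= P x y) -> 0 <= mpow P n x y.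
Proof.
move=> HP; elim: n x y => [|n IH] x y /=; first by rewrite ler0n.
by apply: sumr_ge0 => z _; apply: mulr_ge0.
Qed.

Lemma inv_mpow (P : E -> E -> R) pi n y : inv_vec P pi ->
  \sum_x pi x * mpow P n x y = pi y.
Proof.
move=> Hinv; elim: n y => [|n IH] y /=.
  rewrite (bigD1 y) //= eqxx mulr1 big1 ?addr0 // => x /negPf ->; by rewrite mulr0.
under eq_bigr do rewrite mulr_sumr.
rewrite exchange_big /= -[RHS]Hinv; apply: eq_bigr => z _.
by rewrite -IH mulr_suml; apply: eq_bigr => x _; rewrite mulrA.
Qed.

Lemma pi_pos (P : E -> E -> R) pi : stochastic P -> prob_vec pi -> inv_vec P pi ->
  irreducible P -> forall y, 0 < pi y.
Proof.
move=> [HP0 _] [Hp0 Hp1] Hinv Hirr y.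
have [x px] : exists x, 0 < pi x.
  apply/not_existsP => H.
  have : \sum_x pi x <= 0.
    apply: sumr_le0 => x _; rewrite leNgt; apply/negP => hx; exact: (H x).
  by rewrite Hp1 ler10.
have [n Hn] := Hirr x y.
rewrite -(inv_mpow n y Hinv) (bigD1 x) //=.
apply: ltr_pwDl; first exact: mulr_gt0.
by apply: sumr_ge0 => z _; apply: mulr_ge0 => //; apply: mpow_ge0.
Qed.

Lemma emp_integ (X Y : nat -> E) i j d (h : (E * E) * (E * E) -> R) :
  d%:R * integ (empirical R X Y i j d) h =
  \sum_(k < d) h ((X (i + k)%N, Y (j + k)%N), (X (i + k).+1, Y (j + k).+1)).
Proof.
case: d => [|d]; first by rewrite mul0r big_ord0.
rewrite /integ /empirical mulr_sumr.
under eq_bigr do rewrite mulrCA (mulrA d.+1%:R) mulfV ?pnatr_eq0 // mul1r mulr_sumr.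
rewrite exchange_big /= big_add1 /= big_mkord.
apply: eq_bigr => k _.
rewrite (bigD1 ((X (i + k)%N, Y (j + k)%N), (X (i + k).+1, Y (j + k).+1))) //=.
rewrite !addnS !subn1 /= eqxx mulr1 big1 ?addr0 // => t /negPf.
by rewrite eq_sym => ->; rewrite mulr0.
Qed.

Lemma tvd_bound (T : finType) (mu nu h : T -> R) :
  `|integ mu h - integ nu h| <= (\sum_t `|h t|) * tvd mu nu.
Proof.
rewrite /integ -sumrB mulr_suml.
apply: (le_trans (ler_norm_sum _ _ _)); apply: ler_sum => t _.
rewrite -mulrBr normrM ler_wpM2l //.
have -> : mu t - nu t = \sum_(t' in [set t]) (mu t' - nu t') by rewrite big_set1.
rewrite /tvd; exact: (Order.TotalTheory.le_bigmax _ (fun A : {set T} => `|\sum_(t0 in A) (mu t0 - nu t0)|) [set t]).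
Qed.

Lemma integ_pihat_f2 (f : E -> E -> int) (pistar : E * E -> R) Rs :
  inv_vec Rs pistar ->
  integ (pihat pistar Rs) (f2 R f) = integ pistar (fun u => (f u.1 u.2)%:~R).
Proof.
move=> Hinv; rewrite /integ /pihat /f2.
rewrite -(pair_bigA _ (fun u v => (f v.1 v.2)%:~R * (pistar u * Rs u v))) /= exchange_big /=.
apply: eq_bigr => v _; rewrite -[in RHS]Hinv mulr_sumr.
by apply: eq_bigr => u _; rewrite mulrC.
Qed.

End Basic.


Section Win.
Variable R : realType.
Variable E : finType.
Variable g : (E * E) * (E * E) -> R.

Lemma prod_window (F : nat -> R) a d N : (a + d <= N)%N ->
  \prod_(k < N) (if (a <= k < a + d)%N then F k else 1) = \prod_(j < d) F (a + j)%N.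
Proof.
move=> HN.
rewrite -big_mkcond /= -(big_mkord (fun k => (a <= k < a + d)%N)).
rewrite -(big_nat_widen 0 (a + d) N (fun k => (a <= k)%N)) //.
rewrite (big_cat_nat (n := a)) //=; last exact: leq_addr.
rewrite big_nat_cond big1 ?mul1r; last first.
  by move=> k /andP [/andP [_ Hk]]; rewrite leqNgt Hk.
rewrite big_nat_cond (eq_bigl (fun k => (a <= k < a + d)%N && true)); last first.
  by move=> k /=; rewrite andbT; case: (a <= k)%N; rewrite ?andbF ?andbT.
rewrite -big_nat_cond.
rewrite -{1}[a]add0n big_addn addKn big_mkord.
by apply: eq_bigr => j _; rewrite addnC.
Qed.

Definition Fw (X : nat -> E) (ox oy d : nat) (k : nat) (y y' : E) : R :=
  if (oy <= k < oy + d)%N then expR (g ((X (ox + (k - oy))%N, y), (X (ox + (k - oy)).+1, y')))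
  else 1.

Definition winprod (X Y : nat -> E) ox oy d N :=
  \prod_(k < N) Fw X ox oy d k (Y k) (Y k.+1).

Lemma winprod_exp X Y ox oy d N : (oy + d <= N)%N ->
  winprod X Y ox oy d N =
  expR (\sum_(j < d) g ((X (ox + j)%N, Y (oy + j)%N), (X (ox + j).+1, Y (oy + j).+1))).
Proof.
move=> HN; rewrite expR_sum /winprod /Fw.
rewrite (prod_window (fun k => expR (g ((X (ox + (k - oy))%N, Y k), (X (ox + (k - oy)).+1, Y k.+1))))) //.
by apply: eq_bigr => j _; rewrite addKn.
Qed.

Lemma Fw_out X ox oy d k y y' : ~~ (oy <= k < oy + d)%N -> Fw X ox oy d k y y' = 1.
Proof. by rewrite /Fw => /negPf ->. Qed.

Lemma Fw_ge0 X ox oy d k y y' : 0 <= Fw X ox oy d k y y'.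
Proof. by rewrite /Fw; case: ifP => _ //; exact: expR_ge0. Qed.

Lemma winprod_ge0 X Y ox oy d N : 0 <= winprod X Y ox oy d N.
Proof. by apply: prodr_ge0 => k _; apply: Fw_ge0. Qed.

End Win.


Section Ypart.
Variable R : realType.
Variable E : finType.
Variable g : (E * E) * (E * E) -> R.
Variables (Q : E -> E -> R) (piQ : E -> R).

Lemma pathsum_Y (F : nat -> E -> E -> R) N :
  \sum_(wy : {ffun 'I_N.+1 -> E}) mc_weight piQ Q wy *
     \prod_(k < N) F k (path_of wy k) (path_of wy k.+1)
  = \sum_v vp piQ (fun k y y' => Q y y' * F k y y') N v.
Proof.
have := pathsum piQ (fun k y y' => Q y y' * F k y y') N (fun _ => 1).
under [RHS]eq_bigr do rewrite mulr1.
move=> <-; apply: eq_bigr => w _.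
by rewrite mulr1 /mc_weight big_split /= mulrA.
Qed.

Hypothesis HQ : stochastic Q.
Hypothesis HpiQ : prob_vec piQ /\ inv_vec Q piQ.
Hypothesis Hpos : forall y, 0 < piQ y.

Definition kappa := \sum_y (piQ y)^-1.

Lemma kappa_ge1 v : 1 <= kappa * piQ v.
Proof.
rewrite /kappa (bigD1 v) //= mulrDl mulVf ?gt_eqF // lerDl.
apply: mulr_ge0; last exact: ltW.
by apply: sumr_ge0 => y _; rewrite invr_ge0 ltW.
Qed.

Lemma Q_le1 x y : Q x y <= 1.
Proof.
case: HQ => H0 H1; rewrite -(H1 x) (bigD1 y) //= lerDl.
by apply: sumr_ge0.
Qed.

Definition KY (X : nat -> E) ox oy d := fun k y y' => Q y y' * Fw g X ox oy d k y y'.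

Lemma KY_nonneg X ox oy d : nonnegK (KY X ox oy d).
Proof. by move=> k u v; apply: mulr_ge0; [case: HQ | apply: Fw_ge0]. Qed.

Lemma KY_out X ox oy d k : ~~ (oy <= k < oy + d)%N -> KY X ox oy d k = Q.
Proof.
by move=> H; apply/funext => y; apply/funext => y'; rewrite /KY Fw_out // mulr1.
Qed.

Definition WY (X : nat -> E) o := fun j y y' =>
  Q y y' * expR (g ((X (o + j)%N, y), (X (o + j).+1, y'))).

Lemma KY_window X ox oy d N : (oy + d <= N)%N ->
  \sum_v vp piQ (KY X ox oy d) N v = \sum_v vp piQ (WY X ox) d v.
Proof.
move=> HN.
rewrite (vp_window piQ HN); last first.
  move=> k u Hk; rewrite KY_out; first by case: HQ.
  by rewrite negb_and -!leqNgt; case/andP: Hk => -> _; rewrite orbT.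
rewrite (vp_inv (mu:=piQ) (A:=KY X ox oy d) (n:=oy) (P := Q)); last by case: HpiQ.
  rewrite (vp_ext _ (B := WY X ox)) // => j jd.
  apply/funext => y; apply/funext => y'.
  by rewrite /KY /WY /Fw leq_addr ltn_add2l jd addKn.
by move=> k kn; apply: KY_out; rewrite negb_and -ltnNge kn.
Qed.

Lemma S_ge0 X o d : 0 <= \sum_v vp piQ (WY X o) d v.
Proof.
apply: sumr_ge0 => v _; apply: vp_ge0; first by move=> u; apply: ltW.
by move=> k u w; apply: mulr_ge0; [case: HQ | apply: expR_ge0].
Qed.

Lemma decouple X i T d1 d2 N : (d1 + 1 <= i + T)%N -> N = (i + T + d1 + d2)%N ->
  \sum_(wy : {ffun 'I_N.+1 -> E}) mc_weight piQ Q wy *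
     (winprod g X (path_of wy) 0 0 d1 N * winprod g X (path_of wy) i (i + T) d2 N)
  <= kappa * (\sum_(wy : {ffun 'I_N.+1 -> E}) mc_weight piQ Q wy * winprod g X (path_of wy) 0 0 d1 N)
     * (\sum_(wy : {ffun 'I_N.+1 -> E}) mc_weight piQ Q wy * winprod g X (path_of wy) i i d2 N).
Proof.
move=> Hd1 HN; rewrite /winprod.
under eq_bigr do rewrite -big_split /=.
rewrite (pathsum_Y (fun k y y' => Fw g X 0 0 d1 k y y' * Fw g X i (i + T) d2 k y y')).
rewrite (pathsum_Y (Fw g X 0 0 d1)) (pathsum_Y (Fw g X i i d2)).
rewrite -/(KY X 0 0 d1) -/(KY X i i d2).
rewrite (@KY_window _ _ _ _ N); last by rewrite HN; lia.
rewrite (@KY_window _ _ _ _ N); last by rewrite HN; lia.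
set A12 := (fun (k : nat) (y y' : E) => Q y y' * (Fw g X 0 0 d1 k y y' * Fw g X i (i + T) d2 k y y')).
set S1 := \sum_v vp piQ (WY X 0) d1 v.
set S2 := \sum_v vp piQ (WY X i) d2 v.
have A12nn : nonnegK A12.
  by move=> k u v; rewrite /A12; apply: mulr_ge0; [case: HQ | apply: mulr_ge0; apply: Fw_ge0].
have Hpre : vp piQ A12 d1 = vp piQ (WY X 0) d1.
  apply: vp_ext => k kd; apply/funext => y; apply/funext => y'.
  rewrite /A12 /WY (@Fw_out _ _ g X i (i + T) d2 k); last by apply/negP => /andP [H _]; lia.
  by rewrite mulr1 /Fw add0n kd subn0.
have -> : N = (d1.+1 + (N - d1.+1))%N by rewrite subnKC // HN; lia.
rewrite vp_add.
set r := vp piQ A12 d1.+1.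
have r0 : forall u, 0 <= r u by move=> u; apply: vp_ge0 => // w; apply: ltW.
have Hr : forall v, r v <= (S1 * kappa) * piQ v.
  move=> v; rewrite /r /= Hpre.
  have -> : A12 d1 = Q.
    apply/funext => y; apply/funext => y'; rewrite /A12 !Fw_out ?mulr1 //.
      by apply/negP => /andP [H _]; lia.
    by rewrite ltnn andbF.
  rewrite -mulrA; apply: (le_trans _ (ler_wpM2l (S_ge0 X 0 d1) (kappa_ge1 v))).
  rewrite mulr1 /S1; apply: ler_sum => u _.
  rewrite -[leRHS]mulr1; apply: ler_wpM2l; last exact: Q_le1.
  apply: vp_ge0; first by move=> w; apply: ltW.
  by move=> k w w'; apply: mulr_ge0; [case: HQ | apply: expR_ge0].
have Hshift : (fun k => A12 (d1.+1 + k)%N) = KY X i (i + T - d1.+1) d2.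
  apply/funext => k; apply/funext => y; apply/funext => y'.
  rewrite /A12 /KY (@Fw_out _ _ g X 0 0 d1 (d1.+1 + k)); last by apply/negP => /andP [_ H]; lia.
  rewrite mul1r /Fw.
  have -> : (i + T <= d1.+1 + k < i + T + d2)%N = (i + T - d1.+1 <= k < i + T - d1.+1 + d2)%N.
    apply/idP/idP => /andP [H1 H2]; apply/andP; split; lia.
  case: ifP => // /andP [H1 H2].
  by have -> : (d1.+1 + k - (i + T))%N = (k - (i + T - d1.+1))%N by lia.
apply: (le_trans (y := \sum_v vp (fun u => (S1 * kappa) * piQ u) (fun k => A12 (d1.+1 + k)%N) (N - d1.+1) v)).
  by apply: ler_sum => v _; apply: vp_le.
under eq_bigr do rewrite vp_scale.
rewrite -mulr_sumr Hshift (@KY_window _ _ _ _ (N - d1.+1)%N) //.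
  by rewrite (mulrC S1).
rewrite HN; lia.
Qed.

End Ypart.


Section Triple.
Variable R : realType.
Variable E : finType.
Variable g : (E * E) * (E * E) -> R.
Variables (P Q : E -> E -> R) (piP piQ : E -> R).

Local Notation T3 := ((E * E) * E)%type.

Definition p1 M (w : {ffun 'I_M -> T3}) : {ffun 'I_M -> E} := [ffun k => (w k).1.1].
Definition p2 M (w : {ffun 'I_M -> T3}) : {ffun 'I_M -> E} := [ffun k => (w k).1.2].
Definition p3 M (w : {ffun 'I_M -> T3}) : {ffun 'I_M -> E} := [ffun k => (w k).2].

Lemma sum3 M (H : {ffun 'I_M -> E} -> {ffun 'I_M -> E} -> {ffun 'I_M -> E} -> R) :
  \sum_wx \sum_wy \sum_wz H wx wy wz = \sum_(w : {ffun 'I_M -> T3}) H (p1 w) (p2 w) (p3 w).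
Proof.
under eq_bigr do rewrite pair_bigA; rewrite pair_bigA /=.
rewrite (reindex (fun w : {ffun 'I_M -> T3} => (p1 w, (p2 w, p3 w)))) //=.
exists (fun t : {ffun 'I_M -> E} * ({ffun 'I_M -> E} * {ffun 'I_M -> E}) => [ffun k => ((t.1 k, t.2.1 k), t.2.2 k)] : {ffun 'I_M -> T3}) => [w _|[a [b c]] _] /=.
  by apply/ffunP => k; rewrite !ffunE; case: (w k) => [[]].
by congr (_, (_, _)); apply/ffunP => k; rewrite !ffunE.
Qed.

Definition mu3 (u : T3) := piP u.1.1 * piQ u.1.2 * piQ u.2.
Definition K3 o d k (u v : T3) : R :=
  P u.1.1 v.1.1 * Q u.1.2 v.1.2 * Q u.2 v.2 *
  (if (o <= k < o + d)%N then
     expR (g ((u.1.1, u.1.2), (v.1.1, v.1.2)) + g ((u.1.1, u.2), (v.1.1, v.2)))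
   else 1).

Lemma triple_eq o d N :
  \sum_(wx : {ffun 'I_N.+1 -> E}) mc_weight piP P wx *
    (\sum_(wy : {ffun 'I_N.+1 -> E}) mc_weight piQ Q wy * winprod g (path_of wx) (path_of wy) o o d N) ^+ 2
  = \sum_v vp mu3 (K3 o d) N v.
Proof.
under eq_bigr do rewrite expr2 mulr_suml mulr_sumr.
under eq_bigr => wx _ do under eq_bigr => wy _ do rewrite mulr_sumr.
under eq_bigr => wx _ do under eq_bigr => wy _ do rewrite mulr_sumr.
pose H := (fun wx wy wz : {ffun 'I_N.+1 -> E} => mc_weight piP P wx * ((mc_weight piQ Q wy *
   winprod g (path_of wx) (path_of wy) o o d N) * (mc_weight piQ Q wz *
   winprod g (path_of wx) (path_of wz) o o d N))).
transitivity (\sum_(w : {ffun 'I_N.+1 -> T3}) H (p1 w) (p2 w) (p3 w)); first exact: (sum3 H).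
rewrite /H.
have := pathsum mu3 (K3 o d) N (fun _ => 1).
under [RHS]eq_bigr do rewrite mulr1.
move=> <-; apply: eq_bigr => w _; rewrite mulr1.
rewrite /mc_weight /winprod /mu3 /path_of.
set pP := \prod_(k < N) _.
set pY := \prod_(k < N) _.
set pZ := \prod_(k < N) _.
set fY := \prod_(k < N) _.
set fZ := \prod_(k < N) _.
have -> : piP (p1 w ord0) * pP * (piQ (p2 w ord0) * pY * pZ * (piQ (p3 w ord0) * fY * fZ))
  = piP (p1 w ord0) * piQ (p2 w ord0) * piQ (p3 w ord0) * (pP * pY * fY * (pZ * fZ)) by ring.
rewrite /pP /pY /pZ /fY /fZ -!big_split /= !ffunE; congr (_ * _).
apply: eq_bigr => k _; rewrite /K3 /Fw !ffunE /=.
case: ifP => [/andP [H1 H2]|_]; last by rewrite !mulr1.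
by rewrite subnKC // expRD.
Qed.

Hypotheses (HP : stochastic P) (HQ : stochastic Q) (HpiP : prob_vec piP) (HpiQ : prob_vec piQ).

Lemma PQQ_sum (u : T3) : \sum_(v : T3) P u.1.1 v.1.1 * Q u.1.2 v.1.2 * Q u.2 v.2 = 1.
Proof.
rewrite -(pair_bigA _ (fun ab z => P u.1.1 ab.1 * Q u.1.2 ab.2 * Q u.2 z)) /=.
under eq_bigr do rewrite -mulr_sumr (proj2 HQ) mulr1.
rewrite -(pair_bigA _ (fun a b => P u.1.1 a * Q u.1.2 b)) /=.
under eq_bigr do rewrite -mulr_sumr (proj2 HQ) mulr1.
exact: (proj2 HP).
Qed.

Lemma mu3_sum : \sum_(v : T3) mu3 v = 1.
Proof.
rewrite /mu3 -(pair_bigA _ (fun ab z => piP ab.1 * piQ ab.2 * piQ z)) /=.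
under eq_bigr do rewrite -mulr_sumr (proj2 HpiQ) mulr1.
rewrite -(pair_bigA _ (fun a b => piP a * piQ b)) /=.
under eq_bigr do rewrite -mulr_sumr (proj2 HpiQ) mulr1.
exact: (proj2 HpiP).
Qed.

Lemma K3_nonneg o d : nonnegK (K3 o d).
Proof.
move=> k u v; rewrite /K3; apply: mulr_ge0; last by case: ifP => _ //; apply: expR_ge0.
by apply: mulr_ge0; [apply: mulr_ge0|]; [case: HP|case: HQ|case: HQ].
Qed.

Lemma mu3_ge0 u : 0 <= mu3 u.
Proof. by rewrite /mu3; apply: mulr_ge0; [apply: mulr_ge0|]; [case: HpiP|case: HpiQ|case: HpiQ]. Qed.

Lemma triple_bound o d N c M : (o + d <= N)%N ->
  (forall k u v, `|kpow (Phi1 P Q g) k u v| <= M * c ^+ k) ->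
  \sum_(wx : {ffun 'I_N.+1 -> E}) mc_weight piP P wx *
    (\sum_(wy : {ffun 'I_N.+1 -> E}) mc_weight piQ Q wy * winprod g (path_of wx) (path_of wy) o o d N) ^+ 2
  <= M * c ^+ d *+ (#|{: T3}| * #|{: T3}|).
Proof.
move=> HN HM; rewrite triple_eq (vp_window mu3 HN); last first.
  move=> k u Hk; have Hc : (o <= k < o + d)%N = false.
    by apply/negP => /andP [_ H]; case/andP: Hk => H' _; move: H; rewrite ltnNge H'.
  rewrite /K3; under eq_bigr do rewrite Hc mulr1. exact: PQQ_sum.
rewrite (vp_ext _ (B := fun _ => Phi1 P Q g)); last first.
  move=> j jd; apply/funext => -[[x y] z]; apply/funext => -[[x' y'] z'].
  by rewrite /K3 /Phi1 /= leq_addr ltn_add2l jd mulrC !mulrA.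
set nu := vp mu3 (K3 o d) o.
have nu0 : forall u, 0 <= nu u by move=> u; apply: vp_ge0; [exact: mu3_ge0 | exact: K3_nonneg].
have nu1 : forall u, nu u <= 1.
  move=> u; rewrite -mu3_sum -(@vp_sum_stoch _ _ mu3 (K3 o d) o); last first.
    move=> k w ko; have Hc : (o <= k < o + d)%N = false by rewrite leqNgt ko.
    rewrite /K3; under eq_bigr do rewrite Hc mulr1. exact: PQQ_sum.
  by rewrite (bigD1 u) //= lerDl; apply: sumr_ge0 => w _; apply: nu0.
under eq_bigr do rewrite vp_lin.
rewrite mulrnA -[X in _ <= X]sumr_const; apply: ler_sum => v _.
rewrite -sumr_const; apply: ler_sum => u _.
have Hk := HM d u v.
have Mc : 0 <= M * c ^+ d by apply: le_trans Hk.
apply: (le_trans (ler_wpM2l (nu0 u) (le_trans (ler_norm _) Hk))).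
by rewrite -[leRHS]mul1r ler_wpM2r.
Qed.

End Triple.


Section Final.
Variable R : realType.
Variable E : finType.
Variables (P Q : E -> E -> R) (piP piQ : E -> R).
Hypotheses (HP : stochastic P) (HQ : stochastic Q).
Hypotheses (HpiP : prob_vec piP) (HpiQ : prob_vec piQ).

Lemma mc_sum (pi : E -> R) (K : E -> E -> R) N : stochastic K -> prob_vec pi ->
  \sum_(w : {ffun 'I_N.+1 -> E}) mc_weight pi K w = 1.
Proof.
move=> HK Hpi.
transitivity (\sum_v vp pi (fun _ => K) N v * 1).
  rewrite -(pathsum pi (fun _ => K) N (fun _ => 1)); apply: eq_bigr => w _; by rewrite mulr1.
under eq_bigr do rewrite mulr1.
rewrite vp_sum_stoch; [by case: Hpi | by move=> k u _; case: HK].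
Qed.

Lemma mc_ge0 (pi : E -> R) (K : E -> E -> R) N (w : {ffun 'I_N.+1 -> E}) :
  stochastic K -> prob_vec pi -> 0 <= mc_weight pi K w.
Proof.
move=> [HK _] [Hp _]; rewrite /mc_weight; apply: mulr_ge0 => //.
by apply: prodr_ge0 => k _.
Qed.

Lemma prob_le1 N ev : prob_ev piP piQ P Q N ev <= 1.
Proof.
rewrite /prob_ev -[leRHS](mc_sum N HP HpiP); apply: ler_sum => wx _.
apply: (le_trans (y := \sum_(wy : {ffun 'I_N.+1 -> E}) mc_weight piP P wx * mc_weight piQ Q wy)).
  apply: ler_sum => wy _.
  rewrite -[leRHS]mul1r; apply: ler_wpM2r; first by apply: mulr_ge0; apply: mc_ge0.
  by case: (ev _ _).
by rewrite -mulr_sumr mc_sum // mulr1.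
Qed.

Lemma prob_eq0 N (ev : (nat -> E) -> (nat -> E) -> bool) :
  (forall X Y, ~~ ev X Y) -> prob_ev piP piQ P Q N ev = 0.
Proof.
move=> H; rewrite /prob_ev big1 // => wx _; rewrite big1 // => wy _.
by rewrite (negbTE (H _ _)) mul0r.
Qed.

Lemma amgm (l x y : R) : 0 < l -> x * y <= (l * x ^+ 2 + l^-1 * y ^+ 2) / 2.
Proof.
move=> l0.
have li : 0 <= l^-1 by rewrite invr_ge0 ltW.
have H := mulr_ge0 li (sqr_ge0 (l * x - y)).
have E1 : l^-1 * (l * x - y) ^+ 2 = l * x ^+ 2 - 2 * (x * y) + l^-1 * y ^+ 2.
  by field; rewrite gt_eqF.
rewrite E1 in H; rewrite ler_pdivlMr //; lra.
Qed.

Lemma ev_facts (X Y : nat -> E) (pih h : (E * E) * (E * E) -> R) eta i j d :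
  tvd (empirical R X Y i j d) pih < eta ->
  d%:R * integ pih h - d%:R * ((\sum_t `|h t|) * eta) <=
    \sum_(k < d) h ((X (i + k)%N, Y (j + k)%N), (X (i + k).+1, Y (j + k).+1))
  /\ d%:R * integ (empirical R X Y i j d) h <= d%:R * integ pih h + d%:R * ((\sum_t `|h t|) * eta).
Proof.
move=> Ht.
have C0 : 0 <= \sum_t `|h t| by apply: sumr_ge0 => t _.
have Hb : `|d%:R * integ (empirical R X Y i j d) h - d%:R * integ pih h| <= d%:R * ((\sum_t `|h t|) * eta).
  rewrite -mulrBr normrM normr_nat ler_wpM2l //.
  apply: le_trans (tvd_bound _ _ _) _; apply: ler_wpM2l => //; exact: ltW.
move: Hb; rewrite ler_distl => /andP [H1 H2]; split => //.
by rewrite -(emp_integ X Y i j d h).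
Qed.

Lemma lin_aux (x1 y1 x2 y2 : R) : x1 <= y1 -> x2 <= y2 -> 0 <= - (x1 + x2) + (y1 + y2).
Proof. move=> *; lra. Qed.

Lemma final_arith (s r p Cf Cg eta a L gam u eps Z n1 n2 : R) :
  0 < s -> 0 < p -> 0 <= Cf -> 0 < eta -> 0 < eps ->
  r = u - eps -> 0 < r -> 2 * a - L = u * p -> gam = eps * p / 2 ->
  Z = 2 * Cg + u * Cf + 1 -> 2 * Z * eta = eps * p ->
  s < n1 * (p + Cf * eta) -> s < n2 * (p + Cf * eta) ->
  - ((n1 + n2) * (a - Cg * eta)) + (n1 + n2) * (L + gam) / 2 <= - (s * r).
Proof.
move=> s0 p0 Cf0 eta0 eps0 Hr r0 Hup Hgam HZ HZe S1 S2.
pose q := a - Cg * eta - (L + gam) / 2.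
pose w := p + Cf * eta.
have w0 : 0 < w by rewrite /w; have := mulr_ge0 Cf0 (ltW eta0); lra.
have Hid : 2 * q - r * w - (eta + eps * Cf * eta) = (2 * a - L - u * p) + (eps * p - 2 * Z * eta) / 2.
  by rewrite /q /w Hr Hgam HZ; field.
rewrite Hup HZe !subrr mul0r addr0 in Hid.
have Hrw : r * w <= 2 * q.
  have : 0 <= eta + eps * Cf * eta by apply: addr_ge0; [exact: ltW | rewrite !mulr_ge0 // ltW].
  move: Hid; rewrite -/w; lra.
have q0 : 0 < q by have := mulr_gt0 r0 w0; lra.
have H1 : s * (r * w) <= s * (2 * q) by apply: ler_wpM2l => //; exact: ltW.
have H2 : (2 * s) * q <= ((n1 + n2) * w) * q.
  apply: ler_wpM2r; first exact: ltW.
  rewrite -/w in S1 S2; rewrite mulrDl; lra.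
have H3 : (s * r) * w <= ((n1 + n2) * q) * w.
  move: H1 H2; rewrite !mulrA; have -> : s * 2 = 2 * s by rewrite mulrC.
  move=> H1 H2; apply: (le_trans H1); move: H2; rewrite -!mulrA (mulrC w q) //.
rewrite ler_pM2r // in H3.
have -> : - ((n1 + n2) * (a - Cg * eta)) + (n1 + n2) * (L + gam) / 2 = - ((n1 + n2) * q) by rewrite /q; ring.
by rewrite lerN2.
Qed.

End Final.


Unset Implicit Arguments.
Set Strict Implicit.
Set Printing Implicit Defensive.

Theorem lemma5p3 (R : realType) (E : finType)
  (P Q : E -> E -> R) (piP piQ : E -> R)
  (HP : stochastic P) (HQ : stochastic Q)
  (HPi : irreducible P) (HQi : irreducible Q)
  (HPa : aperiodic P) (HQa : aperiodic Q)
  (HpiP : prob_vec piP /\ inv_vec P piP)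
  (HpiQ : prob_vec piQ /\ inv_vec Q piQ)
  (f : E -> E -> int)
  (Hgcd : \big[gcdz/0%Z]_(p : E * E) f p.1 p.2 = 1%Z)
  (Hneg : \sum_x \sum_y piP x * piQ y * (f x y)%:~R < 0)
  (HC1 : exists n : nat, (0 < n)%N /\ exists (xs ys : nat -> E),
      [/\ forall k, (k < n)%N -> 0 < P (xs k) (xs (k.+1 %% n)%N),
          forall k, (k < n)%N -> 0 < Q (ys k) (ys (k.+1 %% n)%N) &
          0 < \sum_(k < n) (f (xs k) (ys k))%:~R :> R])
  (thetastar : R) (Htheta : 0 < thetastar /\ varphi P Q f thetastar = 1)
  (Htheta_uniq : forall th : R, 0 < th -> varphi P Q f th = 1 -> th = thetastar)
  (rstar : E * E -> R) (Hrpos : forall u, 0 < rstar u)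
  (Hreig : forall u, \sum_v Phi P Q f thetastar u v * rstar v = rstar u)
  (pistar : E * E -> R)
  (Hpistar : prob_vec pistar /\ inv_vec (Rstar P Q f thetastar rstar) pistar)
  (g : (E * E) * (E * E) -> R) (eps : R) (Heps : 0 < eps) :
  exists eta K : R, [/\ 0 < eta, 0 < K &
    forall (s : R) (i delta1 delta2 T : nat),
      0 < s -> (1 <= T)%N -> (i <= delta1)%N -> (delta1 - i <= delta2)%N ->
      (delta1 + 1 <= i + T)%N ->
      let pih := pihat pistar (Rstar P Q f thetastar rstar) in
      prob_ev piP piQ P Q (i + T + delta1 + delta2)
        (fun X Y =>
           let e1 := empirical R X Y 0 0 delta1 in
           let e2 := empirical R X Y i (i + T) delta2 in
           [&& s < delta1%:R * integ e1 (f2 R f),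
               tvd e1 pih < eta,
               s < delta2%:R * integ e2 (f2 R f) &
               tvd e2 pih < eta])
      <= K * expR (- (s * ((2 * integ pih g - ln (varphi1 P Q g))
                              / integ pistar (fun u => (f u.1 u.2)%:~R) - eps)))].
Proof.
pose pih := pihat pistar (Rstar P Q f thetastar rstar).
pose a := integ pih g.
pose L := ln (varphi1 P Q g).
pose p := integ pistar (fun u => (f u.1 u.2)%:~R).
pose r := (2 * a - L) / p - eps.
pose Cf := \sum_t `|f2 R f t|.
pose Cg := \sum_t `|g t|.
have Cf0 : 0 <= Cf by apply: sumr_ge0 => t _.
have Cg0 : 0 <= Cg by apply: sumr_ge0 => t _.
have Hpf : integ pih (f2 R f) = p := integ_pihat_f2 f (proj2 Hpistar).
have [r0|rpos] := lerP r 0.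
  exists 1, 1; split => // s i d1 d2 T s0 _ _ _ _ /=.
  apply: le_trans (prob_le1 HP HQ (proj1 HpiP) (proj1 HpiQ) _ _) _.
  rewrite mul1r -[leLHS]expR0 ler_expR -/pih -/a -/L -/p -/r oppr_ge0.
  by apply: mulr_ge0_le0 => //; apply: ltW.
have evf : forall eta (X Y : nat -> E) s i T d1 d2,
  [&& s < d1%:R * integ (empirical R X Y 0 0 d1) (f2 R f),
      tvd (empirical R X Y 0 0 d1) pih < eta,
      s < d2%:R * integ (empirical R X Y i (i + T) d2) (f2 R f) &
      tvd (empirical R X Y i (i + T) d2) pih < eta] ->
  [/\ s < d1%:R * (p + Cf * eta), s < d2%:R * (p + Cf * eta),
      d1%:R * a - d1%:R * (Cg * eta) <=
        \sum_(k < d1) g ((X (0 + k)%N, Y (0 + k)%N), (X (0 + k).+1, Y (0 + k).+1)) &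
      d2%:R * a - d2%:R * (Cg * eta) <=
        \sum_(k < d2) g ((X (i + k)%N, Y (i + T + k)%N), (X (i + k).+1, Y (i + T + k).+1))].
  move=> eta X Y s i T d1 d2 /and4P [H1 H2 H3 H4].
  have [_ F1] := ev_facts (f2 R f) H2.
  have [G1 _] := ev_facts g H2.
  have [_ F2] := ev_facts (f2 R f) H4.
  have [G2 _] := ev_facts g H4.
  rewrite Hpf in F1 F2; split => //.
    by apply: lt_le_trans H1 _; rewrite mulrDr.
  by apply: lt_le_trans H3 _; rewrite mulrDr.
have [pneg|ppos|pzero] := ltgtP p 0.
- exists (- p / (Cf + 1)), 1; split => //.
    by rewrite divr_gt0 // ?oppr_gt0 // ltr_wpDl.
  move=> s i d1 d2 T s0 _ _ _ _ /=.
  rewrite prob_eq0 ?mul1r ?expR_ge0 // => X Y; apply/negP => /evf [H1 _ _ _].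
  have : p + Cf * (- p / (Cf + 1)) < 0.
    have -> : p + Cf * (- p / (Cf + 1)) = p / (Cf + 1).
      by field; apply: lt0r_neq0; apply: ltr_wpDl.
    by rewrite pmulr_llt0 // invr_gt0 ltr_wpDl.
  move=> Hn; have : d1%:R * (p + Cf * (- p / (Cf + 1))) <= 0.
    by apply: mulr_ge0_le0 => //; apply: ltW.
  by move=> H; move: (lt_le_trans H1 H); rewrite ltNge (ltW s0).
- pose rho := varphi1 P Q g.
  pose gam := eps * p / 2.
  have gam0 : 0 < gam by rewrite divr_gt0 // mulr_gt0.
  pose c := (if 0 < rho then rho else 1) * expR gam.
  have c0 : 0 < c by rewrite /c; case: ifP => H; apply: mulr_gt0 => //; apply: expR_gt0.
  have rc : rho < c.
    rewrite /c; case: ifPn => H.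
      by rewrite -[X in X < _]mulr1 ltr_pM2l // expR_gt1.
    by rewrite mul1r; apply: le_lt_trans (expR_gt0 _); rewrite leNgt.
  have lnc : ln c = L + gam.
    rewrite /c /L -/rho; case: ifPn => H.
      by rewrite lnM ?posrE ?expR_gt0 // expRK.
    by rewrite mul1r expRK ln0 ?add0r // leNgt.
  have [M HM] := @kpow_growth R _ (Phi1 P Q g) c rc.
  pose K1 := M *+ (#|{: (E * E) * E}| * #|{: (E * E) * E}|).
  pose kap := kappa piQ.
  have Hpos : forall y, 0 < piQ y := pi_pos HQ (proj1 HpiQ) (proj2 HpiQ) HQi.
  have kap0 : 0 <= kap by rewrite /kap /kappa; apply: sumr_ge0 => y _; rewrite invr_ge0 ltW.
  pose D := 2 * a - L.
  pose u := D / p.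
  have ur : r = u - eps by [].
  have u0 : 0 < u by move: rpos; rewrite ur; lra.
  pose Z := 2 * Cg + u * Cf + 1.
  have Z0 : 0 < Z by rewrite /Z; have := mulr_ge0 (ltW u0) Cf0; lra.
  pose eta := eps * p / (2 * Z).
  have eta0 : 0 < eta by rewrite /eta divr_gt0 ?mulr_gt0.
  have etaZ : 2 * Z * eta = eps * p by rewrite /eta; field; rewrite gt_eqF.
  exists eta, (Num.max 1 (kap * K1)); split => //; first by rewrite lt_max ltr01.
  move=> s i d1 d2 T s0 T1 id1 d2ge hT /=.
  rewrite -/pih -/a -/L -/p -/r.
  pose N := (i + T + d1 + d2)%N.
  pose n1 : R := d1%:R.
  pose n2 : R := d2%:R.
  pose A' := a - Cg * eta.
  pose B := expR (- ((n1 + n2) * A')).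
  have [/andP [S1 S2]|Hns] := boolP ((s < n1 * (p + Cf * eta)) && (s < n2 * (p + Cf * eta))); last first.
    rewrite prob_eq0; first by apply: mulr_ge0; [rewrite le_max ler01 | apply: expR_ge0].
    by move=> X Y; apply/negP => /evf [H1 H2 _ _]; apply: (negP Hns); rewrite H1 H2.
  have HpiP1 := proj1 HpiP.
  have HpiQ1 := proj1 HpiQ.
  pose G (wx : {ffun 'I_N.+1 -> E}) o d := \sum_(wy : {ffun 'I_N.+1 -> E})
     mc_weight piQ Q wy * winprod g (path_of wx) (path_of wy) o o d N.
  apply: (le_trans (y := \sum_(wx : {ffun 'I_N.+1 -> E}) \sum_(wy : {ffun 'I_N.+1 -> E})
     B * (mc_weight piP P wx * (mc_weight piQ Q wy *
       (winprod g (path_of wx) (path_of wy) 0 0 d1 N * winprod g (path_of wx) (path_of wy) i (i + T) d2 N))))).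
    rewrite /prob_ev; apply: ler_sum => wx _; apply: ler_sum => wy _.
    have W0 : 0 <= mc_weight piP P wx * mc_weight piQ Q wy by apply: mulr_ge0; apply: mc_ge0.
    have wp0 : 0 <= winprod g (path_of wx) (path_of wy) 0 0 d1 N * winprod g (path_of wx) (path_of wy) i (i + T) d2 N.
      by apply: mulr_ge0; apply: winprod_ge0.
    have -> : B * (mc_weight piP P wx * (mc_weight piQ Q wy *
       (winprod g (path_of wx) (path_of wy) 0 0 d1 N * winprod g (path_of wx) (path_of wy) i (i + T) d2 N)))
      = (mc_weight piP P wx * mc_weight piQ Q wy) * (B * (winprod g (path_of wx) (path_of wy) 0 0 d1 N * winprod g (path_of wx) (path_of wy) i (i + T) d2 N)) by ring.
    case Hev : [&& _, _, _ & _].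
      have [_ _ G1 G2] := evf _ _ _ _ _ _ _ _ Hev.
      rewrite mul1r -[leLHS]mulr1 ler_wpM2l //.
      have N1 : (0 + d1 <= N)%N by rewrite add0n (leq_trans (leq_addl (i + T) d1)) // leq_addr.
      have N2 : (i + T + d2 <= N)%N by rewrite leq_add2r leq_addr.
      rewrite (winprod_exp _ _ _ _ N1) (winprod_exp _ _ _ _ N2).
      rewrite /B -!expRD -[leLHS]expR0 ler_expR.
      move: G1 G2; rewrite /A' mulrDl !mulrBr -/n1 -/n2; exact: lin_aux.
    by rewrite mul0r; apply: mulr_ge0 => //; apply: mulr_ge0 => //; apply: expR_ge0.
  pose lam := expR ((n2 - n1) * ln c / 2).
  have lam0 : 0 < lam := expR_gt0 _.
  have B0 : 0 <= B := expR_ge0 _.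
  have Wge0 : forall wx : {ffun 'I_N.+1 -> E}, 0 <= mc_weight piP P wx by move=> wx; apply: mc_ge0.
  apply: (le_trans (y := \sum_(wx : {ffun 'I_N.+1 -> E}) B * (kap * (mc_weight piP P wx * (G wx 0%N d1 * G wx i d2))))).
    apply: ler_sum => wx _.
    rewrite -mulr_sumr ler_wpM2l //.
    rewrite -mulr_sumr mulrCA ler_wpM2l // mulrA.
    exact: (decouple g HQ HpiQ Hpos (path_of wx) hT (erefl N)).
  pose n3 := (#|{: (E * E) * E}| * #|{: (E * E) * E}|)%N.
  apply: (le_trans (y := B * (kap * ((lam * (M * c ^+ d1 *+ n3) + lam^-1 * (M * c ^+ d2 *+ n3)) / 2)))).
    rewrite -!mulr_sumr ler_wpM2l // ler_wpM2l //.
    apply: (le_trans (ler_sum _ (fun wx _ => ler_wpM2l (Wge0 wx) (amgm (G wx 0%N d1) (G wx i d2) lam0)))).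
    apply: (le_trans (y := (lam * \sum_(wx : {ffun 'I_N.+1 -> E}) mc_weight piP P wx * G wx 0%N d1 ^+ 2
        + lam^-1 * \sum_(wx : {ffun 'I_N.+1 -> E}) mc_weight piP P wx * G wx i d2 ^+ 2) / 2)).
      rewrite le_eqVlt; apply/orP; left; apply/eqP; rewrite !mulr_sumr -big_split mulr_suml /=; apply: eq_bigr => wx _; ring.
    have lam0' : 0 <= lam := ltW lam0.
    have lam1 : 0 <= lam^-1 by rewrite invr_ge0.
    rewrite ler_wpM2r ?invr_ge0 //; apply: lerD; apply: ler_wpM2l => //.
      have N1 : (0 + d1 <= N)%N by rewrite add0n (leq_trans (leq_addl (i + T) d1)) // leq_addr.
      exact: (triple_bound HP HQ HpiP1 HpiQ1 N1 HM).
    have N3 : (i + d2 <= N)%N by rewrite /N -!addnA leq_add2l addnA leq_addl.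
    exact: (triple_bound HP HQ HpiP1 HpiQ1 N3 HM).
  rewrite -!mulrnAl -/K1.
  have cE : forall d : nat, c ^+ d = expR (d%:R * ln c).
    by move=> d; rewrite expRM_natl lnK // posrE.
  have e1 : lam * expR (n1 * ln c) = expR ((n1 + n2) * ln c / 2).
    by rewrite /lam -expRD; congr expR; field.
  have e2 : lam^-1 * expR (n2 * ln c) = expR ((n1 + n2) * ln c / 2).
    by rewrite /lam -expRN -expRD; congr expR; field.
  have -> : B * (kap * ((lam * (K1 * c ^+ d1) + lam^-1 * (K1 * c ^+ d2)) / 2))
      = kap * K1 * (B * ((lam * expR (n1 * ln c) + lam^-1 * expR (n2 * ln c)) / 2)).
    by rewrite !cE -/n1 -/n2; ring.
  rewrite e1 e2 (_ : (expR ((n1 + n2) * ln c / 2) + expR ((n1 + n2) * ln c / 2)) / 2 = expR ((n1 + n2) * ln c / 2)); last by field.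
  rewrite /B -expRD lnc.
  have Km : kap * K1 <= Num.max 1 (kap * K1) by rewrite le_max lexx orbT.
  apply: (le_trans (ler_wpM2r (expR_ge0 _) Km)).
  apply: ler_wpM2l; first by rewrite le_max ler01.
  rewrite ler_expR /A'.
  apply: (final_arith (u := u) (Z := Z) s0 ppos Cf0 eta0 Heps ur rpos _ erefl erefl etaZ S1 S2).
  by rewrite /u mulfVK // gt_eqF.
- move: rpos; rewrite /r pzero invr0 mulr0 sub0r oppr_gt0 => H.
  by move: (lt_trans H Heps); rewrite ltxx.
Qed.
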